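(* If a finite poset $P$ contains an articulation point, i.e., a point $x\in P$ comparable with every other point of $P$, then $P$ is an $\exists$-game.
   Context: A finite poset $P$ defines a poset game: two players alternate moves; a move consists of choosing a point $x$ of the current poset $Q$ and replacing $Q$ by $Q_x:=\{y\in Q: x\not\le y\}$ (i.e., removing $x$ and every point above it); the first player unable to move (because the poset is empty) loses. $P$ is an $\exists$-game if the player who moves first has a winning strategy, and a $\forall$-game otherwise. *)

(* Defs.v *)
From HB Require Import structures.
From mathcomp Require Import all_boot all_order.
Set Implicit Arguments. Unset Strict Implicit. Unset Printing Implicit Defensive.
Import Order.Theory.
Local Open Scope order_scope.

(* The poset game on a finite poset T (the carrier of a finPOrderType).
   Positions are subsets Q of T (with the induced order).  A move at x in Q
   replaces Q by Q_x = {y in Q | ~ x <= y}. *)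
Definition move {d} {T : finPOrderType d} (Q : {set T}) (x : T) : {set T} :=
  [set y in Q | ~~ (x <= y)].

(* [first_wins n Q] : with fuel n, the player to move in position Q has a
   winning strategy.  Each move strictly decreases #|Q|, so fuel n >= #|Q|
   computes the true value; we always use fuel #|Q|. *)
Fixpoint first_wins {d} {T : finPOrderType d} (n : nat) (Q : {set T}) : bool :=
  match n with
  | 0 => false
  | n'.+1 => [exists x in Q, ~~ first_wins n' (move Q x)]
  end.

Definition exists_game {d} (T : finPOrderType d) : Prop :=
  first_wins #|[set: T]| [set: T].

Definition articulation_point {d} {T : finPOrderType d} (x : T) : Prop :=
  forall y : T, y != x -> (x <= y) || (y <= x).

(* Main.v *)
Require Import Defs.
From mathcomp Require Import all_boot all_order.
Import Order.Theory.
Local Open Scope order_scope.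

Lemma card_move d (T : finPOrderType d) (Q : {set T}) x :
  x \in Q -> (#|move Q x| < #|Q|)%N.
Proof.
move=> xQ; apply: proper_card; apply/properP; split.
  by apply/subsetP=> y; rewrite inE => /andP[].
by exists x => //; rewrite inE lexx andbF.
Qed.

Lemma fuel d (T : finPOrderType d) n : forall m (Q : {set T}),
  (#|Q| <= n)%N -> (#|Q| <= m)%N -> first_wins n Q = first_wins m Q.
Proof.
elim: n => [|n IH] [|m] Q /=.
- by [].
- rewrite leqn0 cards_eq0 => /eqP -> _.
  by apply/esym/negbTE/existsP=> -[y]; rewrite inE.
- move=> _; rewrite leqn0 cards_eq0 => /eqP ->.
  by apply/negbTE/existsP=> -[y]; rewrite inE.
- move=> Hn Hm; apply: eq_existsb => y.
  case yQ: (y \in Q) => //=.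
  have := @card_move _ _ Q y yQ => H.
  by rewrite (IH m) // -ltnS; apply: leq_trans H _.
Qed.

Theorem mainTheorem2 (d : Order.disp_t) (T : finPOrderType d) :
  (exists x : T, articulation_point x) -> exists_game T.
Proof.
move=> [x Hx]; rewrite /exists_game.
have xT : x \in [set: T] by rewrite inE.
set D := move [set: T] x.
have cD := @card_move _ _ _ x xT.
move: cD; case Hk: #|[set: T]| => [|k] // cD /=.
apply/existsP.
case HD: (first_wins k D).
- move: HD; case: k Hk cD => [|k] Hk cD //= /existsP [z /andP [zD Hz]].
  exists z; rewrite inE andTb.
  have zx : z <= x.
    move: zD; rewrite inE /= => /andP [_ nxz].
    have : z != x by apply: contraNneq nxz => ->; rewrite lexx.
    by move/Hx; rewrite (negbTE nxz).
  have -> : move [set: T] z = move D z.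
    apply/setP=> y; rewrite !inE /=.
    case zy: (z <= y); first by rewrite andbF.
    rewrite andbT; apply/esym/negP => xy.
    by move: zy; rewrite (le_trans zx xy).
  have := @card_move _ _ D z zD => H.
  change (~~ first_wins k.+1 (move D z)).
  rewrite (@fuel _ _ k.+1 k) //; first by rewrite ltnW // (leq_trans H).
  by rewrite -ltnS (leq_trans H).
- by exists x; rewrite xT HD.
Qed.
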